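(* Consider the two-stage robust problem $\min_{x\in\mathcal X}c_1x+\max_{u\in\mathcal U(x)}\min_{y\in\mathcal Y(x,u)}c_2y$ with decision-dependent uncertainty set $\mathcal U(x)=\{u\in\mathbb R^{n_u}_+: x_{li}\le u_i\le x_{hi},\ i=1,\dots,n_u\}$, where $x_l=(x_{l1},\dots,x_{ln_u})$ and $x_h=(x_{h1},\dots,x_{hn_u})$ are subvectors of the first-stage variables, and $\mathcal U(x)\ne\emptyset$ for all $x\in\mathcal X$. Then it is equivalent to $\min_{x\in\mathcal X}c_1x+\max_{u\in\mathcal U^0}\min_{y\in\mathcal Y'(x,u)}c_2y$, where $\mathcal U^0=[0,1]^{n_u}$ and $\mathcal Y'(x,u)=\{y\in\mathbb Z^{m_y}_+\times\mathbb R^{n_y}_+: B_2y\ge d-B_1x-E(x_l+u\circ(x_h-x_l))\}$.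
   Context: $\mathcal X=\{x\in\mathbb Z^{m_x}_+\times\mathbb R^{n_x}_+: Ax\ge b\}$, $\mathcal Y(x,u)=\{y\in\mathbb Z^{m_y}_+\times\mathbb R^{n_y}_+: B_2y\ge d-B_1x-Eu\}$, $\circ$ is the componentwise product. The optimal value of an infeasible minimization (maximization) problem is $+\infty$ ($-\infty$). Two formulations are called equivalent if they have the same optimal value and any optimal first-stage solution of one is optimal for the other, and vice versa. *)

(* Defs.v *)
From HB Require Import structures.
From mathcomp Require Import all_boot all_order all_algebra.
From mathcomp Require Import all_classical all_reals.
From mathcomp Require Import ereal.
Set Implicit Arguments. Unset Strict Implicit. Unset Printing Implicit Defensive.
Import Order.TTheory GRing.Theory Num.Theory.
Local Open Scope classical_set_scope.
Local Open Scope ring_scope.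

Definition mixed_nonneg (R : realType) (m n : nat) (v : 'cV[R]_(m + n)) : Prop :=
  (forall i : 'I_m, v (lshift n i) 0 \is a Num.int) /\ (forall i, 0 <= v i 0).

Definition vge (R : realType) (k : nat) (a b : 'cV[R]_k) : Prop :=
  forall i, b i 0 <= a i 0.

Definition Xset (R : realType) (mx nx p : nat) (A : 'M[R]_(p, mx + nx))
  (b : 'cV[R]_p) : set 'cV[R]_(mx + nx) :=
  [set x | mixed_nonneg x /\ vge (A *m x) b].

Definition Yset (R : realType) (mx nx my ny nu q : nat)
  (B1 : 'M[R]_(q, mx + nx)) (B2 : 'M[R]_(q, my + ny)) (E : 'M[R]_(q, nu))
  (d : 'cV[R]_q) (x : 'cV[R]_(mx + nx)) (w : 'cV[R]_nu) : set 'cV[R]_(my + ny) :=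
  [set y | mixed_nonneg y /\ vge (B2 *m y) (d - B1 *m x - E *m w)].

Definition subvec (R : realType) (N nu : nat) (s : 'I_nu -> 'I_N)
  (x : 'cV[R]_N) : 'cV[R]_nu := \col_i x (s i) 0.

Definition Uset (R : realType) (N nu : nat) (l h : 'I_nu -> 'I_N)
  (x : 'cV[R]_N) : set 'cV[R]_nu :=
  [set u | forall i, 0 <= u i 0 /\ subvec l x i 0 <= u i 0 /\ u i 0 <= subvec h x i 0].

Definition U0 (R : realType) (nu : nat) : set 'cV[R]_nu :=
  [set u | forall i, 0 <= u i 0 /\ u i 0 <= 1].

Definition cprod (R : realType) (k : nat) (a b : 'cV[R]_k) : 'cV[R]_k :=
  \col_i (a i 0 * b i 0).

(* optimal value of min_{y in Y} c y  (+oo if Y is empty) *)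
Definition minval (R : realType) (n : nat) (c : 'rV[R]_n) (Y : set 'cV[R]_n) : \bar R :=
  ereal_inf [set ((c *m y) 0 0)%:E | y in Y].

Definition two_stage_obj (R : realType) (N nu n : nat) (c1 : 'rV[R]_N) (c2 : 'rV[R]_n)
  (U : 'cV[R]_N -> set 'cV[R]_nu) (Y : 'cV[R]_N -> 'cV[R]_nu -> set 'cV[R]_n)
  (x : 'cV[R]_N) : \bar R :=
  ((c1 *m x) 0 0)%:E + ereal_sup [set minval c2 (Y x u) | u in U x].

(* optimal value of min_{x in X} f x  (+oo if X is empty) *)
Definition optval (R : realType) (N : nat) (X : set 'cV[R]_N) (f : 'cV[R]_N -> \bar R)
  : \bar R := ereal_inf (f @` X).

Definition is_optimal (R : realType) (N : nat) (X : set 'cV[R]_N)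
  (f : 'cV[R]_N -> \bar R) (x : 'cV[R]_N) : Prop :=
  X x /\ f x = optval X f.

(* Main.v *)
Require Import Defs.
From HB Require Import structures.
From mathcomp Require Import all_boot all_order all_algebra.
From mathcomp Require Import all_classical all_reals.
From mathcomp Require Import ereal.
Import Order.TTheory GRing.Theory Num.Theory.
Local Open Scope classical_set_scope.
Local Open Scope ring_scope.


Lemma key_eq (R : realType) (mx nx my ny nu q : nat)
  (B1 : 'M[R]_(q, mx + nx)) (B2 : 'M[R]_(q, my + ny)) (E : 'M[R]_(q, nu))
  (d : 'cV[R]_q) (c1 : 'rV[R]_(mx + nx)) (c2 : 'rV[R]_(my + ny))
  (l h : 'I_nu -> 'I_(mx + nx)) (x : 'cV[R]_(mx + nx)) :
  (forall i, 0 <= x i 0) -> Uset l h x !=set0 ->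
  two_stage_obj c1 c2 (Uset l h) (Yset B1 B2 E d) x =
  two_stage_obj c1 c2 (fun _ => @U0 R nu)
     (fun x u => Yset B1 B2 E d x
        (subvec l x + cprod u (subvec h x - subvec l x))) x.
Proof.
move=> x0 [u0 Hu0].
have lh : forall i, x (l i) 0 <= x (h i) 0.
  move=> i; have [_ [a b]] := Hu0 i; rewrite /subvec !mxE in a b; exact: le_trans a b.
rewrite /two_stage_obj; congr (_ + ereal_sup _)%E.
rewrite eqEsubset; split => e /=.
- move=> [u Hu <-].
  pose u' := \col_i (if x (l i) 0 < x (h i) 0 then
                     (u i 0 - x (l i) 0) / (x (h i) 0 - x (l i) 0) else 0).
  exists u'.
    move=> i; rewrite /u' mxE; case: ifP => lt; last by rewrite lexx ler01.
    have [_ [a b]] := Hu i; rewrite /subvec !mxE in a b.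
    have dp : 0 < x (h i) 0 - x (l i) 0 by rewrite subr_gt0.
    split; first by rewrite divr_ge0 // subr_ge0.
    by rewrite ler_pdivrMr // mul1r lerD2r.
  congr (minval c2 (Yset B1 B2 E d x _)).
  apply/matrixP => i j; rewrite (ord1 j) /subvec /cprod /u' !mxE.
  have [_ [a b]] := Hu i; rewrite /subvec !mxE in a b.
  case: ifP => lt.
    rewrite divfK ?subrKC //; by rewrite subr_eq0 gt_eqF.
  have eq : x (l i) 0 = x (h i) 0.
    by apply/eqP; rewrite eq_le lh /= leNgt lt.
  rewrite mul0r addr0; apply/eqP; rewrite eq_le a /= eq; exact: b.
- move=> [u Hu <-]; exists (subvec l x + cprod u (subvec h x - subvec l x)) ; last by [].
  move=> i; rewrite /subvec /cprod !mxE.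
  have [a b] := Hu i.
  have dp : 0 <= x (h i) 0 - x (l i) 0 by rewrite subr_ge0.
  have m0 : 0 <= u i 0 * (x (h i) 0 - x (l i) 0) by rewrite mulr_ge0.
  split; first by rewrite addr_ge0.
  split; first by rewrite lerDl.
  rewrite -lerBrDl; rewrite -[X in _ <= X]mul1r; exact: ler_wpM2r.
Qed.

Theorem proposition4 (R : realType) (mx nx my ny nu p q : nat)
  (A : 'M[R]_(p, mx + nx)) (b : 'cV[R]_p)
  (B1 : 'M[R]_(q, mx + nx)) (B2 : 'M[R]_(q, my + ny)) (E : 'M[R]_(q, nu))
  (d : 'cV[R]_q) (c1 : 'rV[R]_(mx + nx)) (c2 : 'rV[R]_(my + ny))
  (l h : 'I_nu -> 'I_(mx + nx)) :
  (forall x, Xset A b x -> Uset l h x !=set0) ->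
  let X := Xset A b in
  let f1 := two_stage_obj c1 c2 (Uset l h) (Yset B1 B2 E d) in
  let f2 := two_stage_obj c1 c2 (fun _ => @U0 R nu)
     (fun x u => Yset B1 B2 E d x
        (subvec l x + cprod u (subvec h x - subvec l x))) in
  optval X f1 = optval X f2 /\
  (forall x, is_optimal X f1 x <-> is_optimal X f2 x).
Proof.
move=> HU X f1 f2.
have K : forall x, X x -> f1 x = f2 x.
  move=> x Xx; apply: key_eq; last exact: HU.
  by case: Xx => -[_ ?] _.
have O : optval X f1 = optval X f2.
  rewrite /optval; congr ereal_inf; rewrite eqEsubset; split => e [x Xx <-].
    by exists x; [exact: Xx | rewrite K].
  by exists x; [exact: Xx | rewrite K].
rewrite /is_optimal; clearbody X f1 f2.
split; first exact: O.
move=> x; split=> -[Xx Hx]; (split; first exact: Xx).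
  by rewrite -(K x Xx) Hx O.
by rewrite (K x Xx) Hx O.
Qed.
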